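(* Let $\pi\colon\mathsf{States}\to\mathbb{R}_{\ge0}$ be a potential function, let $C$ be a program and let $f,g\in\mathbb{T}$. If $\mathrm{mod}(C)\cap\mathrm{Vars}(g)=\emptyset$, then $$\mathsf{aert}_\pi[\![C]\!]\big((f\oplus g)-\pi\big)\;\preceq\;\Big(\big(\mathsf{aert}_\pi[\![C]\!](f-\pi)+\pi\big)\oplus g\Big)-\pi .$$
   Context: States and programs. Fix a finite set $\mathrm{Vars}$ of variables; values are $\mathbb{N}$, locations are $\mathbb{N}_{>0}$. A stack is $s\colon \mathrm{Vars}\to\mathbb{N}$; a heap is a partial map $h$ from a finite set $\mathrm{dom}(h)\subseteq\mathbb{N}_{>0}$ to $\mathbb{N}$. $h_1\perp h_2$ means disjoint domains; then $h_1\star h_2$ is their union; $h_\emptyset$ is the empty heap. $\mathsf{States}$ is the set of pairs $(s,h)$. $s(e)$ is the value of a (heap-independent) arithmetic expression $e$ under $s$, $s\models\varphi$ means the Boolean expression $\varphi$ holds under $s$, $s[x\mapsto v]$ is the updated stack. Programs are generated by $C ::= \mathtt{tick}(e) \mid x:=e \mid x:=\mathtt{alloc}(e) \mid \langle e\rangle:=e' \mid x:=\langle e\rangle \mid \mathtt{free}(e) \mid \{C\}[p]\{C\} \mid \mathtt{if}(\varphi)\{C\}\mathtt{else}\{C\} \mid C;C \mid \mathtt{while}(\varphi)\{C\}$, where $p$ is an expression with $s(p)\in[0,1]\cap\mathbb{Q}$ for all $s$. The statements other than tick, probabilistic choice, conditional, sequencing and loops are called atomic. $\mathrm{mod}(C)$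 is the set of variables potentially modified by $C$, i.e. the variables $x$ occurring as the target of $x:=e$, $x:=\mathtt{alloc}(e)$ or $x:=\langle e\rangle$ in $C$. For a runtime $g$, $x\notin\mathrm{Vars}(g)$ means $g(s[x\mapsto v],h)=g(s,h)$ for all $(s,h)$ and $v$. Runtimes. $\mathbb{T}$ is the set of functions $\mathsf{States}\to[0,\infty]$, ordered pointwise by $\preceq$; arithmetic is pointwise with $0\cdot\infty=0$. $[\varphi]$ is the $0/1$-valued Iverson bracket. Truncated subtraction: $a\dot- b=\max(a-b,0)$, $\infty\dot- b=\infty$ for finite $b$, $a\dot-\infty=0$. Separating sum $(f\oplus g)(s,h)=\min\{f(s,h_1)+g(s,h_2)\mid h=h_1\star h_2\}$ (also applied to nonnegative functions with values in $[0,\infty]$); $(f \mathbin{-\!\!\ominus} g)(s,h)=\sup\{g(s,h\star h')\dot- f(s,h')\mid h'\perp h\}$; $(\inf y\colon f)(s,h)=\inf_{v\in\mathbb{N}} f(s[y\mapsto v],h)$, $(\sup y\colon f)(s,h)=\sup_{v\in\mathbb{N}}f(s[y\mapsto v],h)$; $f[x/e](s,h)=f(s[x\mapsto s(e)],h)$. $\mathsf{tm}(e)(s,h)=s(e)$ if $h=h_\emptyset$, else $\infty$; $[e\mapsto e'](s,h)=0$ if $\mathrm{dom}(h)=\{s(e)\}$ and $h(s(e))=s(e')$, else $\infty$; $[e\mapsto -](s,h)=0$ if $\mathrm{dom}(h)=\{s(e)\}$, else $\infty$; $\bigoplus_{i=1}^{e} f_i$ is the separating sum over $i=1,\dots,s(e)$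 (empty one: $[\mathsf{emp}]$, which is $0$ if $h=h_\emptyset$, else $\infty$). $\mathsf{ert}[\![C]\!]\colon\mathbb{T}\to\mathbb{T}$ (with $v$ fresh): $\mathsf{ert}[\![\mathtt{tick}(e)]\!](f)=\mathsf{tm}(e)\oplus f$; $\mathsf{ert}[\![x:=e]\!](f)=f[x/e]$; $\mathsf{ert}[\![x:=\mathtt{alloc}(e)]\!](f)=\sup v\colon (\bigoplus_{i=1}^{e}[v+i-1\mapsto 0])\mathbin{-\!\!\ominus} f[x/v]$; $\mathsf{ert}[\![\langle e\rangle:=e']\!](f)=[e\mapsto-]\oplus([e\mapsto e']\mathbin{-\!\!\ominus} f)$; $\mathsf{ert}[\![x:=\langle e\rangle]\!](f)=\inf v\colon [e\mapsto v]\oplus([e\mapsto v]\mathbin{-\!\!\ominus} f[x/v])$; $\mathsf{ert}[\![\mathtt{free}(e)]\!](f)=[e\mapsto-]\oplus f$; $\mathsf{ert}[\![C_1;C_2]\!](f)=\mathsf{ert}[\![C_1]\!](\mathsf{ert}[\![C_2]\!](f))$; conditional: $[\varphi]\cdot\mathsf{ert}[\![C_1]\!](f)+[\neg\varphi]\cdot\mathsf{ert}[\![C_2]\!](f)$; probabilistic choice: $p\cdot\mathsf{ert}[\![C_1]\!](f)+(1-p)\cdot\mathsf{ert}[\![C_2]\!](f)$; $\mathsf{ert}[\![\mathtt{while}(\varphi)\{C\}]\!](f)=\mathrm{lfp}\, g.\ [\neg\varphi]\cdot f+[\varphi]\cdot\mathsf{ert}[\![C]\!](g)$. Amortized runtimes.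 A potential function is $\pi\colon\mathsf{States}\to\mathbb{R}_{\ge0}$. $\mathbb{A}_\pi=\{X\colon\mathsf{States}\to\mathbb{R}\cup\{\infty\}\mid -\pi\le X\}$, ordered pointwise (complete lattice, least element $-\pi$). $\mathsf{aert}_\pi[\![C]\!]\colon\mathbb{A}_\pi\to\mathbb{A}_\pi$: $\mathsf{aert}_\pi[\![\mathtt{tick}(e)]\!](X)=e+X$; for atomic $C$ other than tick, $\mathsf{aert}_\pi[\![C]\!](X)=\mathsf{ert}[\![C]\!](X+\pi)-\pi$; sequencing by composition; conditional $[\varphi]\cdot\mathsf{aert}_\pi[\![C_1]\!](X)+[\neg\varphi]\cdot\mathsf{aert}_\pi[\![C_2]\!](X)$; probabilistic choice $p\cdot\mathsf{aert}_\pi[\![C_1]\!](X)+(1-p)\cdot\mathsf{aert}_\pi[\![C_2]\!](X)$; $\mathsf{aert}_\pi[\![\mathtt{while}(\varphi)\{C'\}]\!](X)=\mathrm{lfp}\,Y.\ [\neg\varphi]\cdot X+[\varphi]\cdot\mathsf{aert}_\pi[\![C']\!](Y)$ in $(\mathbb{A}_\pi,\preceq)$. *)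

(* Defs.v *)
From HB Require Import structures.
From mathcomp Require Import all_boot all_order all_algebra.
From mathcomp Require Import finmap.
From mathcomp Require Import classical_sets reals constructive_ereal ereal.
Set Implicit Arguments. Unset Strict Implicit. Unset Printing Implicit Defensive.
Import Order.TTheory GRing.Theory Num.Theory.
Local Open Scope ring_scope.
Local Open Scope ereal_scope.
Local Open Scope classical_set_scope.

Record loc := Loc { lval : nat; lval_pos : (0 < lval)%N }.
HB.instance Definition _ := [isSub for lval].
HB.instance Definition _ := [Countable of loc by <:].

Definition heap := {fmap loc -> nat}.
Definition hemp : heap := [fmap]%fmap.
Definition hdisj (h1 h2 : heap) : bool := fdisjoint (domf h1) (domf h2).
Definition hunion (h1 h2 : heap) : heap := catf h1 h2.

Section Semantics.
Variable V : finType.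
Variable R : realType.

Definition stack := V -> nat.
Definition state := (stack * heap)%type.
Definition upd (s : stack) (x : V) (v : nat) : stack :=
  fun y => if y == x then v else s y.

Definition aexp := stack -> nat.
Definition bexp := stack -> bool.
Definition pexp := {p : stack -> rat | forall s, (0 <= p s <= 1)%R}.
Definition pval (p : pexp) (s : stack) : rat := proj1_sig p s.

Inductive prog : Type :=
| Tick of aexp
| Assign of V & aexp
| Alloc of V & aexp
| Store of aexp & aexp                 (* <e> := e' *)
| Lookup of V & aexp                     (* x := <e> *)
| Free of aexp
| PChoice of prog & pexp & prog        (* {C1}[p]{C2} *)
| Ite of bexp & prog & prog
| Seq of prog & prog
| While of bexp & prog.

Fixpoint modv (C : prog) : pred V :=
  match C with
  | Assign x _ | Alloc x _ | Lookup x _ => pred1 x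
  | Tick _ | Store _ _ | Free _ => pred0
  | PChoice C1 _ C2 | Ite _ C1 C2 | Seq C1 C2 => predU (modv C1) (modv C2)
  | While _ C1 => modv C1
  end.

(* Extended-real valued functions on states; runtimes T are the
   nonnegative ones, A_pi those bounded below by -pi. *)
Definition fn := state -> \bar R.
Definition leF (f g : fn) : Prop := forall st, f st <= g st.
Definition isRuntime (f : fn) : Prop := forall st, 0 <= f st.

(* x does not occur in g (semantic). *)
Definition notin_vars (x : V) (g : fn) : Prop :=
  forall s h v, g (upd s x v, h) = g (s, h).

Definition tsub (a b : \bar R) : \bar R :=
  if b == +oo then 0 else if a == +oo then +oo else maxe (a - b) 0.

Definition sepsum (f g : fn) : fn := fun st =>
  ereal_inf [set z | exists h1 h2 : heap,
     [/\ hdisj h1 h2, st.2 = hunion h1 h2 & z = f (st.1, h1) + g (st.1, h2)]].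

Definition sepimp (f g : fn) : fn := fun st =>
  ereal_sup [set tsub (g (st.1, hunion st.2 h')) (f (st.1, h')) |
             h' in [set h' : heap | hdisj h' st.2]].

Definition infv (y : V) (f : fn) : fn := fun st =>
  ereal_inf [set f (upd st.1 y v, st.2) | v in [set: nat]].
Definition supv (y : V) (f : fn) : fn := fun st =>
  ereal_sup [set f (upd st.1 y v, st.2) | v in [set: nat]].
Definition subst (f : fn) (x : V) (e : aexp) : fn := fun st =>
  f (upd st.1 x (e st.1), st.2).

Definition tm (e : aexp) : fn := fun st =>
  if st.2 == hemp then ((e st.1)%:R)%:E else +oo.
Definition emp : fn := fun st => if st.2 == hemp then 0 else +oo.

Definition ptv (l w : nat) : fn := fun st =>
  match insub l with
  | Some k => if (domf st.2 == [fset k]%fset) && (st.2.[? k]%fmap == Some w)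
              then 0 else +oo
  | None => +oo
  end.
Definition ptany (l : nat) : fn := fun st =>
  match insub l with
  | Some k => if domf st.2 == [fset k]%fset then 0 else +oo
  | None => +oo
  end.
Definition pt (e e' : aexp) : fn := fun st => ptv (e st.1) (e' st.1) st.
Definition pt_ (e : aexp) : fn := fun st => ptany (e st.1) st.

Fixpoint bigsep (n : nat) (F : nat -> fn) : fn :=
  match n with
  | 0 => emp
  | n'.+1 => sepsum (bigsep n' F) (F n'.+1)
  end.

(* least fixed point of phi within the sublattice L of (fn, pointwise <=),
   via Knaster--Tarski: pointwise infimum of the prefixed points in L. *)
Definition lfp_in (L : fn -> Prop) (phi : fn -> fn) : fn := fun st =>
  ereal_inf [set Y st | Y in [set Y | L Y /\ leF (phi Y) Y]].

Definition iver (b : bexp) (A B : fn) : fn := fun st =>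
  if b st.1 then A st else B st.

Definition pmix (p : pexp) (A B : fn) : fn := fun st =>
  (ratr (pval p st.1))%:E * A st + (ratr (1 - pval p st.1))%:E * B st.

Fixpoint ert (C : prog) (f : fn) : fn :=
  match C with
  | Tick e => sepsum (tm e) f
  | Assign x e => subst f x e
  | Alloc x e => fun st =>
      ereal_sup [set sepimp (bigsep (e st.1) (fun i st' => ptv (v + i - 1) 0 st'))
                            (fun st' => f (upd st'.1 x v, st'.2)) st
                | v in [set: nat]]
  | Store e e' => sepsum (pt_ e) (sepimp (pt e e') f)
  | Lookup x e => fun st =>
      ereal_inf [set sepsum (fun st' => ptv (e st'.1) v st')
                            (sepimp (fun st' => ptv (e st'.1) v st')
                                    (fun st' => f (upd st'.1 x v, st'.2))) st
                | v in [set: nat]]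
  | Free e => sepsum (pt_ e) f
  | PChoice C1 p C2 => pmix p (ert C1 f) (ert C2 f)
  | Ite b C1 C2 => iver b (ert C1 f) (ert C2 f)
  | Seq C1 C2 => ert C1 (ert C2 f)
  | While b C1 => lfp_in isRuntime (fun g => iver b (ert C1 g) f)
  end.

Section Aert.
Variable pi : state -> R.
Definition addpi (X : fn) : fn := fun st => X st + (pi st)%:E.
Definition subpi (X : fn) : fn := fun st => X st - (pi st)%:E.
Definition inA (X : fn) : Prop := forall st, - (pi st)%:E <= X st.

Fixpoint aert (C : prog) (X : fn) : fn :=
  match C with
  | Tick e => fun st => ((e st.1)%:R)%:E + X st
  | Assign _ _ | Alloc _ _ | Store _ _ | Lookup _ _ | Free _ =>
      subpi (ert C (addpi X))
  | PChoice C1 p C2 => pmix p (aert C1 X) (aert C2 X)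
  | Ite b C1 C2 => iver b (aert C1 X) (aert C2 X)
  | Seq C1 C2 => aert C1 (aert C2 X)
  | While b C1 => lfp_in inA (fun Y => iver b (aert C1 Y) X)
  end.
End Aert.

End Semantics.

(* Main.v *)
Require Import Defs.
From HB Require Import structures.
From mathcomp Require Import all_boot all_order all_algebra.
From mathcomp Require Import finmap.
From mathcomp Require Import boolp classical_sets reals constructive_ereal ereal.
From mathcomp Require Import ring lra.
Import Order.TTheory GRing.Theory Num.Theory.
Local Open Scope ring_scope.
Local Open Scope ereal_scope.
Lemma hdisj_sym (a b : heap) : hdisj a b = hdisj b a.
Proof. by rewrite /hdisj fdisjoint_sym. Qed.

Lemma hdisj_unionl (a b c : heap) : hdisj (hunion a b) c = hdisj a c && hdisj b c.
Proof. by rewrite /hdisj /hunion domf_cat fdisjointUX. Qed.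

Lemma hdisj_unionr (a b c : heap) : hdisj a (hunion b c) = hdisj a b && hdisj a c.
Proof. by rewrite /hdisj /hunion domf_cat fdisjointXU. Qed.

Lemma hunionA (a b c : heap) : hunion a (hunion b c) = hunion (hunion a b) c.
Proof. by rewrite /hunion catfA. Qed.

Lemma hunionC (a b : heap) : hdisj a b -> hunion a b = hunion b a.
Proof. by move=> d; rewrite /hunion disjoint_catfC. Qed.

Lemma hdisj0 (a : heap) : hdisj hemp a.
Proof. by rewrite /hdisj /hemp domf0 fdisjoint0X. Qed.

Lemma hunion0 (a : heap) : hunion a hemp = a.
Proof. by rewrite /hunion /hemp catf0. Qed.
Lemma sepsum_ub {V : finType} {R : realType} (F G : fn V R) {st : state V} {h1 h2 : heap} :
  hdisj h1 h2 -> st.2 = hunion h1 h2 ->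
  sepsum F G st <= F (st.1, h1) + G (st.1, h2).
Proof. by move=> d e; apply: ereal_inf_lbound; exists h1, h2. Qed.

Lemma sepsum_lb {V : finType} {R : realType} (F G : fn V R) (st : state V) x :
  (forall h1 h2, hdisj h1 h2 -> st.2 = hunion h1 h2 -> x <= F (st.1, h1) + G (st.1, h2)) ->
  x <= sepsum F G st.
Proof. by move=> H; apply: le_ereal_inf_tmp => z [h1 [h2 [d e ->]]]; apply: H. Qed.

Lemma sepsum_mono {V : finType} {R : realType} (F F' G G' : fn V R) (st : state V) :
  (forall h, F (st.1, h) <= F' (st.1, h)) -> (forall h, G (st.1, h) <= G' (st.1, h)) ->
  sepsum F G st <= sepsum F' G' st.
Proof.
move=> HF HG; apply: sepsum_lb => h1 h2 d e.
by apply: (le_trans (sepsum_ub F G d e)); apply: leeD.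
Qed.

Lemma sepsum_ge0 {V : finType} {R : realType} (F G : fn V R) (st : state V) :
  (forall h, 0 <= F (st.1, h)) -> (forall h, 0 <= G (st.1, h)) -> 0 <= sepsum F G st.
Proof. by move=> HF HG; apply: sepsum_lb => h1 h2 _ _; apply: adde_ge0. Qed.

Lemma sepimp_ub {V : finType} {R : realType} (F G : fn V R) {st : state V} {h' : heap} :
  hdisj h' st.2 -> tsub (G (st.1, hunion st.2 h')) (F (st.1, h')) <= sepimp F G st.
Proof. by move=> d; apply: ereal_sup_ubound; exists h'. Qed.

Lemma sepimp_lub {V : finType} {R : realType} (F G : fn V R) (st : state V) x :
  (forall h', hdisj h' st.2 -> tsub (G (st.1, hunion st.2 h')) (F (st.1, h')) <= x) ->
  sepimp F G st <= x.
Proof. by move=> H; apply: ge_ereal_sup => z [h' d <-]; apply: H. Qed.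

Lemma tsub_ge0 {R : realType} (a b : \bar R) : 0 <= tsub a b.
Proof.
rewrite /tsub; case: ifP => // _; case: ifP => _; first by rewrite leey.
by rewrite le_max lexx orbT.
Qed.

Lemma sepimp_ge0 {V : finType} {R : realType} (F G : fn V R) (st : state V) :
  0 <= sepimp F G st.
Proof. by apply: le_trans (sepimp_ub F G (hdisj0 _)); apply: tsub_ge0. Qed.

Lemma tsub_mono {R : realType} (a a' b : \bar R) : a <= a' -> tsub a b <= tsub a' b.
Proof.
rewrite /tsub => H; case: ifP => // _.
case: ifP => [/eqP Ha|_].
  by subst a; have -> : a' = +oo by apply/eqP; rewrite -leye_eq.
case: ifP => _; first by rewrite leey.
rewrite ge_max; apply/andP; split; rewrite le_max; apply/orP; [left|right] => //.
exact: leeB.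
Qed.

Lemma sepimp_mono {V : finType} {R : realType} (P G G' : fn V R) (st : state V) :
  (forall h, G (st.1, h) <= G' (st.1, h)) -> sepimp P G st <= sepimp P G' st.
Proof.
move=> H; apply: sepimp_lub => h' d; apply: le_trans (sepimp_ub _ _ d).
exact: tsub_mono.
Qed.

Lemma tsub_addr {R : realType} (a b c : \bar R) : 0 <= c ->
  tsub (a + c) b <= tsub a b + c.
Proof.
move=> c0; rewrite /tsub.
case: ifP => _; first by rewrite add0e.
have X0 : 0 <= (if a == +oo then +oo else maxe (a - b) 0).
  by case: ifP => _; rewrite ?leey // le_max lexx orbT.
case: c c0 => [c| |//]; rewrite ?lee_fin => c0; last first.
  rewrite [X in _ <= X]addey; first exact: leey.
  by apply/negP => /eqP E; rewrite E leeNy_eq in X0.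
have key : a != +oo -> maxe (a + c%:E - b) 0 <= maxe (a - b) 0 + c%:E.
  move=> _; rewrite ge_max; apply/andP; split; last first.
    by apply: adde_ge0; rewrite ?lee_fin // le_max lexx orbT.
  by rewrite addeAC; apply: leeD2r; rewrite le_max lexx.
case: a X0 key => [a| |] /= X0 key; try exact: key.
by rewrite leey.
Qed.
Lemma le_inf_plus {R : realType} (S : set (\bar R)) (x c : \bar R) :
  0 <= c -> (forall y, S y -> 0 <= y) -> (forall y, S y -> x <= y + c) ->
  x <= ereal_inf S + c.
Proof.
move=> c0 S0 H; case: c c0 H => [c| |//] c0 H; last first.
  rewrite addey ?leey //; apply/negP => /eqP E.
  have : 0 <= ereal_inf S by apply: le_ereal_inf_tmp => y /S0.
  by rewrite E leeNy_eq.
rewrite -leeBlDr //; apply: le_ereal_inf_tmp => y Sy; rewrite leeBlDr //; exact: H.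
Qed.

Lemma sepsum_le_plus {V : finType} {R : realType} (F G : fn V R) (st : state V) x c :
  0 <= c -> (forall h, 0 <= F (st.1, h)) -> (forall h, 0 <= G (st.1, h)) ->
  (forall h1 h2, hdisj h1 h2 -> st.2 = hunion h1 h2 -> x <= F (st.1, h1) + G (st.1, h2) + c) ->
  x <= sepsum F G st + c.
Proof.
move=> c0 F0 G0 H; apply: le_inf_plus => // y.
  by move=> [h1 [h2 [_ _ ->]]]; apply: adde_ge0.
by move=> [h1 [h2 [d e ->]]]; apply: H.
Qed.

Lemma sepimp_frame {V : finType} {R : realType} (P F G g : fn V R) (st : state V) b h2 :
  hdisj b h2 -> st.2 = hunion b h2 -> 0 <= g (st.1, h2) ->
  (forall h1, hdisj h1 h2 -> F (st.1, hunion h1 h2) <= G (st.1, h1) + g (st.1, h2)) ->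
  sepimp P F st <= sepimp P G (st.1, b) + g (st.1, h2).
Proof.
move=> dbh e g0 H; apply: sepimp_lub => h' d.
move: d; rewrite e hdisj_unionr => /andP[d1 d2].
have -> : hunion (hunion b h2) h' = hunion (hunion b h') h2.
  by rewrite -hunionA (@hunionC h2 h') ?hunionA // hdisj_sym.
have d3 : hdisj (hunion b h') h2 by rewrite hdisj_unionl dbh d2.
eapply le_trans; first exact: (@tsub_mono _ _ _ (P (st.1, h')) (H _ d3)).
eapply le_trans; first exact: (tsub_addr _ _ _ g0).
apply: leeD2r.
by apply: (@sepimp_ub _ _ P G (st.1, b) h').
Qed.

Lemma sepsum_frame {V : finType} {R : realType} (P F G g : fn V R) (st : state V) :
  (forall h, 0 <= P (st.1, h)) -> (forall h, 0 <= G (st.1, h)) -> (forall h, 0 <= g (st.1, h)) ->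
  (forall h1 h2, hdisj h1 h2 -> F (st.1, hunion h1 h2) <= G (st.1, h1) + g (st.1, h2)) ->
  sepsum P F st <= sepsum (sepsum P G) g st.
Proof.
move=> P0 G0 g0 H; apply: sepsum_lb => h1 h2 d e.
apply: (@sepsum_le_plus _ _ P G (st.1, h1)) => //= a b dab eab.
move: d; rewrite eab hdisj_unionl => /andP[d1 d2].
have e' : st.2 = hunion a (hunion b h2) by rewrite e eab hunionA.
have d3 : hdisj a (hunion b h2) by rewrite hdisj_unionr dab.
eapply le_trans; first exact: (sepsum_ub P F d3 e').
by rewrite -addeA; apply: leeD2l; apply: H.
Qed.
Definition atomic {V : finType} (C : prog V) : bool :=
  match C with Assign _ _ | Alloc _ _ | Store _ _ | Lookup _ _ | Free _ => true | _ => false end.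

Lemma ptv_ge0 {V : finType} {R : realType} l w (st : state V) : 0 <= @ptv V R l w st.
Proof. by rewrite /ptv; case: insub => [k|]; try case: ifP; rewrite ?leey. Qed.

Lemma ptany_ge0 {V : finType} {R : realType} l (st : state V) : 0 <= @ptany V R l st.
Proof. by rewrite /ptany; case: insub => [k|]; try case: ifP; rewrite ?leey. Qed.

Lemma ert_mono {V : finType} {R : realType} (C : prog V) (F G : fn V R) :
  atomic C -> leF F G -> leF (ert C F) (ert C G).
Proof.
case: C => //= [x e|x e|e e'|x e|e] _ H [s h] /=.
- exact: H.
- apply: ge_ereal_sup => _ [v _ <-].
  eapply le_trans; last by apply: ereal_sup_ubound; exists v.
  by apply: sepimp_mono => h'; apply: H.
- by apply: sepsum_mono => h' //; apply: sepimp_mono => h''; apply: H.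
- apply: le_ereal_inf_tmp => _ [v _ <-].
  eapply le_trans; first by apply: ereal_inf_lbound; exists v.
  by apply: sepsum_mono => h' //; apply: sepimp_mono => h''; apply: H.
- by apply: sepsum_mono => h' //; apply: H.
Qed.

Lemma ert_ge0 {V : finType} {R : realType} (C : prog V) (F : fn V R) :
  atomic C -> isRuntime F -> isRuntime (ert C F).
Proof.
case: C => //= [x e|x e|e e'|x e|e] _ H [s h] /=.
- exact: H.
- eapply le_trans; last by apply: ereal_sup_ubound; exists 0%N.
  exact: sepimp_ge0.
- by apply: sepsum_ge0 => h'; rewrite /pt_ ?ptany_ge0 ?sepimp_ge0.
- apply: le_ereal_inf_tmp => _ [v _ <-].
  by apply: sepsum_ge0 => h'; rewrite ?ptv_ge0 ?sepimp_ge0.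
- by apply: sepsum_ge0 => h'; rewrite /pt_ ?ptany_ge0 ?H.
Qed.

Lemma ert_frame {V : finType} {R : realType} (C : prog V) (f g : fn V R) :
  atomic C -> isRuntime f -> isRuntime g -> (forall x, modv C x -> notin_vars x g) ->
  leF (ert C (sepsum f g)) (sepsum (ert C f) g).
Proof.
case: C => //= [x e|x e|e e'|x e|e] _ f0 g0 Hm [s h] /=.
- have nx := Hm x (eqxx x).
  apply: sepsum_lb => h1 h2 d E /=; rewrite /subst /=.
  eapply le_trans; first exact: (@sepsum_ub _ _ f g (upd s x (e s), h) _ _ d E).
  by rewrite /= nx.
- have nx := Hm x (eqxx x).
  apply: sepsum_lb => h1 h2 d E /=.
  apply: ge_ereal_sup => _ [v _ <-].
  eapply le_trans.
    apply: (@sepimp_frame _ _ _ _ (fun st' => f (upd st'.1 x v, st'.2)) g (s, h) h1 h2) => //= h1' d'.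
    eapply le_trans; first exact: (@sepsum_ub _ _ f g (upd s x v, hunion h1' h2) _ _ d' erefl).
    by rewrite /= nx.
  by apply: leeD2r; apply: ereal_sup_ubound; exists v.
- apply: sepsum_frame => //= [h'|h'|h1 h2 d].
  + by rewrite /pt_ ptany_ge0.
  + exact: sepimp_ge0.
  + apply: (@sepimp_frame _ _ _ _ f g (s, hunion h1 h2) h1 h2) => //= h1' d'.
    exact: (@sepsum_ub _ _ f g (s, hunion h1' h2) _ _ d' erefl).
- have nx := Hm x (eqxx x).
  apply: sepsum_lb => h1 h2 d E /=.
  apply: le_inf_plus => //.
    by move=> _ [v _ <-]; apply: sepsum_ge0 => h'; rewrite ?ptv_ge0 ?sepimp_ge0.
  move=> _ [v _ <-].
  eapply le_trans; first by apply: ereal_inf_lbound; exists v.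
  eapply le_trans; last exact: (@sepsum_ub _ _ _ g (s, h) _ _ d E).
  apply: sepsum_frame => //= [h'|h'|h1' h2' d'].
  + exact: ptv_ge0.
  + exact: sepimp_ge0.
  + apply: (@sepimp_frame _ _ _ _ (fun st' => f (upd st'.1 x v, st'.2)) g (s, hunion h1' h2') h1' h2') => //= h1'' d''.
    eapply le_trans; first exact: (@sepsum_ub _ _ f g (upd s x v, hunion h1'' h2') _ _ d'' erefl).
    by rewrite /= nx.
- apply: sepsum_frame => //= [h'|h1 h2 d].
  + by rewrite /pt_ ptany_ge0.
  + exact: (@sepsum_ub _ _ f g (s, hunion h1 h2) _ _ d erefl).
Qed.
Lemma pval_ge0 {V : finType} {R : realType} (p : pexp V) s : (0 <= (ratr (pval p s) : R))%R.
Proof. by rewrite ler0q; case/andP: (proj2_sig p s). Qed.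

Lemma pval_le1 {V : finType} {R : realType} (p : pexp V) s : ((ratr (pval p s) : R) <= 1)%R.
Proof. case/andP: (proj2_sig p s) => _ h; rewrite -(ler_rat R) in h; by rewrite rmorph1 in h. Qed.

Lemma ratr1B {R : realType} (r : rat) : (ratr (1 - r) : R) = (1 - ratr r)%R.
Proof. by rewrite rmorphB rmorph1. Qed.

Lemma pval_ge0' {V : finType} {R : realType} (p : pexp V) s : (0 <= (ratr (1 - pval p s) : R))%R.
Proof. by rewrite ratr1B subr_ge0 pval_le1. Qed.

Lemma lfp_lb {V : finType} {R : realType} (L : fn V R -> Prop) phi Y :
  L Y -> leF (phi Y) Y -> leF (lfp_in L phi) Y.
Proof. by move=> LY HY st; apply: ereal_inf_lbound; exists Y. Qed.

Lemma lfp_pre {V : finType} {R : realType} (L : fn V R -> Prop) phi :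
  (forall X Y, leF X Y -> leF (phi X) (phi Y)) -> leF (phi (lfp_in L phi)) (lfp_in L phi).
Proof.
move=> Hm st; apply: le_ereal_inf_tmp => _ [Y [LY HY] <-].
apply: le_trans (HY st); apply: Hm; exact: lfp_lb.
Qed.

Lemma aert_mono {V : finType} {R : realType} (pi : state V -> R) (C : prog V) :
  forall X Y, leF X Y -> leF (aert pi C X) (aert pi C Y).
Proof.
have At : forall (C' : prog V) (X Y : fn V R), atomic C' -> leF X Y ->
    leF (subpi pi (ert C' (addpi pi X))) (subpi pi (ert C' (addpi pi Y))).
  move=> C' X Y a H st; rewrite /subpi; apply: leeB => //.
  by apply: ert_mono => // st'; apply: leeD2r.
elim: C => [e|x e|x e|e e'|x e|e|C1 IH1 p C2 IH2|b C1 IH1 C2 IH2|C1 IH1 C2 IH2|b C1 IH1]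
  X Y H; try exact: At.
- by move=> st /=; apply: leeD2l.
- move=> st /=; rewrite /pmix; apply: leeD; apply: lee_wpmul2l;
    rewrite ?lee_fin ?pval_ge0 ?pval_ge0' //; [exact: IH1|exact: IH2].
- by move=> st /=; rewrite /iver; case: ifP => _; [exact: IH1|exact: IH2].
- by apply: IH1; apply: IH2.
- move=> st /=; apply: le_ereal_inf_tmp => _ [Z [LZ HZ] <-].
  apply: ereal_inf_lbound; exists Z => //; split => // st'.
  apply: le_trans (HZ st'); rewrite /iver; case: ifP => // _; exact: H.
Qed.

Lemma inA_iff {R : realType} (x : \bar R) (p : R) : (- p%:E <= x) = (0 <= x + p%:E).
Proof. by rewrite -[- _]sub0e leeBlDr. Qed.

Lemma aert_inA {V : finType} {R : realType} (pi : state V -> R) (C : prog V) :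
  (forall st, (0 <= pi st)%R) -> forall X, inA pi X -> inA pi (aert pi C X).
Proof.
move=> pi0.
have At : forall (C' : prog V) (X : fn V R), atomic C' -> inA pi X ->
    inA pi (subpi pi (ert C' (addpi pi X))).
  move=> C' X a H st; rewrite /subpi -[X in X <= _]sub0e; apply: leeB => //.
  by apply: ert_ge0 => // st'; rewrite /addpi -inA_iff.
elim: C => [e|x e|x e|e e'|x e|e|C1 IH1 p C2 IH2|b C1 IH1 C2 IH2|C1 IH1 C2 IH2|b C1 IH1]
  X H; try exact: At.
- by move=> st /=; apply: le_trans (H st) _; apply: leeDr; rewrite lee_fin.
- move=> st /=; rewrite /pmix.
  have E : (ratr (pval p st.1))%:E * (- (pi st))%:E +
           (ratr (1 - pval p st.1))%:E * (- (pi st))%:E = (- (pi st))%:E.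
    by rewrite -!EFinM -EFinD ratr1B; congr EFin; ring.
  rewrite -E.
  apply: leeD; apply: lee_wpmul2l;
    rewrite ?lee_fin ?pval_ge0 ?pval_ge0' //; [exact: IH1|exact: IH2].
- by move=> st /=; rewrite /iver; case: ifP => _; [exact: IH1|exact: IH2].
- by apply: IH1; apply: IH2.
- by move=> st /=; apply: le_ereal_inf_tmp => _ [Z [LZ HZ] <-]; apply: LZ.
Qed.
Lemma pmix_elt {R : realType} (p P P1 : R) (a1 a2 g2 : \bar R) :
  (0 <= p <= 1)%R -> (- P1)%:E <= a1 -> (- P1)%:E <= a2 -> 0 <= g2 ->
  p%:E * (a1 + P1%:E + g2 - P%:E) + (1 - p)%:E * (a2 + P1%:E + g2 - P%:E) + P%:E
  <= p%:E * a1 + (1 - p)%:E * a2 + P1%:E + g2.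
Proof.
move=> /andP[p0 p1] h1 h2 g0.
have [->|pn0] := eqVneq p 0%R.
  by rewrite subr0 !mul0e !mul1e !add0e subeK.
have [->|pn1] := eqVneq p 1%R.
  by rewrite subrr !mul0e !mul1e !adde0 subeK.
have pp : (0 < p)%R by rewrite lt_neqAle eq_sym pn0.
have qp : (0 < 1 - p)%R by rewrite subr_gt0 lt_neqAle pn1.
have ng2 : g2 != -oo by apply/negP => /eqP E; rewrite E leeNy_eq in g0.
have nP1 : P1%:E != -oo by [].
have nu1 : p%:E * a1 != -oo.
  apply/negP => /eqP E; have : p%:E * (- P1)%:E <= p%:E * a1.
    by apply: lee_wpmul2l; rewrite // lee_fin ltW.
  by rewrite E leeNy_eq.
have nu2 : (1 - p)%:E * a2 != -oo.
  apply/negP => /eqP E; have : (1 - p)%:E * (- P1)%:E <= (1 - p)%:E * a2.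
    by apply: lee_wpmul2l; rewrite // lee_fin ltW.
  by rewrite E leeNy_eq.
move: nu1 nu2 h1 h2 ng2 g0.
case: a1 => [r1| |]; case: a2 => [r2| |]; case: g2 => [r| |] => nu1 nu2 h1 h2 ng2 g0;
  rewrite ?leeNy_eq in h1 h2 g0 => //.
  do 5! rewrite -?EFinN -?EFinM -?EFinD.
  by rewrite lee_fin le_eqVlt; apply/orP; left; apply/eqP; ring.
all: rewrite [X in _ <= X](_ : _ = +oo) ?leey //.
all: rewrite ?gt0_muley ?lte_fin //.
all: do 4! rewrite ?addye ?addey //.
Qed.
Lemma addpi_subpi {V : finType} {R : realType} (pi : state V -> R) (F : fn V R) :
  addpi pi (subpi pi F) = F.
Proof. by apply: funext => st; rewrite /addpi /subpi subeK. Qed.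

Lemma subpi_addpi {V : finType} {R : realType} (pi : state V -> R) (F : fn V R) :
  subpi pi (addpi pi F) = F.
Proof. by apply: funext => st; rewrite /addpi /subpi addeK. Qed.

Lemma aert_atomicE {V : finType} {R : realType} (pi : state V -> R) (C : prog V) X :
  atomic C -> aert pi C X = subpi pi (ert C (addpi pi X)).
Proof. by case: C. Qed.

Lemma inA_subpi {V : finType} {R : realType} (pi : state V -> R) (f : fn V R) :
  isRuntime f -> inA pi (subpi pi f).
Proof. by move=> f0 st; rewrite /subpi -[X in X <= _]sub0e; apply: leeB. Qed.

Lemma runtime_addpi {V : finType} {R : realType} (pi : state V -> R) (X : fn V R) :
  inA pi X -> isRuntime (addpi pi X).
Proof. by move=> H st; rewrite /addpi -inA_iff. Qed.

Lemma atomic_case {V : finType} {R : realType} (pi : state V -> R) (C : prog V) (f g : fn V R) :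
  atomic C -> isRuntime f -> isRuntime g -> (forall x, modv C x -> notin_vars x g) ->
  leF (aert pi C (subpi pi (sepsum f g)))
      (subpi pi (sepsum (addpi pi (aert pi C (subpi pi f))) g)).
Proof.
move=> a f0 g0 Hm st; rewrite !aert_atomicE // !addpi_subpi /subpi.
by apply: leeB => //; apply: ert_frame.
Qed.

Theorem mainTheorem5 (V : finType) (R : realType) (pi : state V -> R)
    (C : prog V) (f g : fn V R) :
  (forall st, (0 <= pi st)%R) ->
  isRuntime f -> isRuntime g ->
  (forall x, modv C x -> notin_vars x g) ->
  leF (aert pi C (subpi pi (sepsum f g)))
      (subpi pi (sepsum (addpi pi (aert pi C (subpi pi f))) g)).
Proof.
move=> pi0 f0 g0.
elim: C f f0 => [e|x e|x e|e e'|x e|e|C1 IH1 p C2 IH2|b C1 IH1 C2 IH2|C1 IH1 C2 IH2|b C1 IH1]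
  f f0 Hm; try exact: atomic_case.
-
  move=> [s h] /=; rewrite /subpi addeA; apply: leeB => //.
  apply: sepsum_lb => h1 h2 d E /=; rewrite /addpi /subpi /=.
  rewrite -[X in _ <= X + _]addeA EFinN subeK // -addeA; apply: leeD2l.
  exact: (@sepsum_ub _ _ f g (s, h) _ _ d E).
-
  have Hm1 : forall x, modv C1 x -> notin_vars x g by move=> x Hx; apply: Hm => /=; rewrite /= Hx.
  have Hm2 : forall x, modv C2 x -> notin_vars x g by move=> x Hx; apply: Hm => /=; rewrite /= Hx orbT.
  move=> [s h] /=; rewrite /pmix /=.
  have q1 : 0 <= (ratr (pval p s))%:E :> \bar R by rewrite lee_fin pval_ge0.
  have q2 : 0 <= (ratr (1 - pval p s))%:E :> \bar R by rewrite lee_fin pval_ge0'.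
  apply: (le_trans (leeD (lee_wpmul2l q1 (IH1 f f0 Hm1 (s, h)))
                         (lee_wpmul2l q2 (IH2 f f0 Hm2 (s, h))))).
  rewrite /subpi leeBrDr //; apply: sepsum_lb => h1 h2 d E /=; rewrite /addpi /pmix /=.
  have PE := @pmix_elt R (ratr (pval p s)) (pi (s, h)) (pi (s, h1))
    (aert pi C1 (subpi pi f) (s, h1)) (aert pi C2 (subpi pi f) (s, h1)) (g (s, h2))
    ltac:(by rewrite pval_ge0 pval_le1) (aert_inA pi C1 pi0 _ (inA_subpi pi f f0) _)
    (aert_inA pi C2 pi0 _ (inA_subpi pi f f0) _) (g0 _).
  rewrite ratr1B in q2 *.
  apply: (le_trans _ PE).
  apply: leeD2r; apply: leeD; apply: lee_wpmul2l => //; rewrite EFinN; apply: leeB => //.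
  + exact: (@sepsum_ub _ _ _ g (s, h) _ _ d E).
  + exact: (@sepsum_ub _ _ _ g (s, h) _ _ d E).
-
  have Hm1 : forall x, modv C1 x -> notin_vars x g by move=> x Hx; apply: Hm => /=; rewrite /= Hx.
  have Hm2 : forall x, modv C2 x -> notin_vars x g by move=> x Hx; apply: Hm => /=; rewrite /= Hx orbT.
  move=> [s h] /=; rewrite /iver /=; case Hb: (b s).
  + eapply le_trans; first exact: (IH1 f f0 Hm1 (s, h)).
    rewrite /subpi; apply: leeB => //; apply: sepsum_mono => h' //=.
    by rewrite /addpi /iver /= Hb.
  + eapply le_trans; first exact: (IH2 f f0 Hm2 (s, h)).
    rewrite /subpi; apply: leeB => //; apply: sepsum_mono => h' //=.
    by rewrite /addpi /iver /= Hb.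
-
  have Hm1 : forall x, modv C1 x -> notin_vars x g by move=> x Hx; apply: Hm => /=; rewrite /= Hx.
  have Hm2 : forall x, modv C2 x -> notin_vars x g by move=> x Hx; apply: Hm => /=; rewrite /= Hx orbT.
  move=> st /=.
  eapply le_trans; first by apply: aert_mono; exact: (IH2 f f0 Hm2).
  have r2 := runtime_addpi pi _ (aert_inA pi C2 pi0 _ (inA_subpi pi f f0)).
  by have := IH1 _ r2 Hm1 st; rewrite subpi_addpi.
-
  have LinA : inA pi (lfp_in (inA pi) (fun Y => iver b (aert pi C1 Y) (subpi pi f))).
    by move=> st; apply: le_ereal_inf_tmp => _ [Y [LY _] <-]; exact: LY.
  have Lpre := @lfp_pre _ _ (inA pi) (fun Y => iver b (aert pi C1 Y) (subpi pi f))
     (fun X Y H st => ltac:(rewrite /iver; case: ifP => _ //; exact: aert_mono)).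
  move=> st /=; apply: lfp_lb.
  + move=> st'; rewrite /subpi -[X in X <= _]sub0e; apply: leeB => //.
    apply: sepsum_ge0 => h //; exact: runtime_addpi pi _ LinA _.
  + move=> [s h]; rewrite /iver /=; case Hb: (b s).
    * have r := runtime_addpi pi _ LinA.
      eapply le_trans; first exact: (IH1 _ r Hm (s, h)).
      rewrite subpi_addpi /subpi; apply: leeB => //; apply: sepsum_mono => h' //=.
      rewrite /addpi; apply: leeD2r.
      by have := Lpre (s, h'); rewrite /iver /= Hb.
    * rewrite /subpi; apply: leeB => //; apply: sepsum_mono => h' //=.
      have := Lpre (s, h'); rewrite /iver /= Hb /addpi /subpi.
      by rewrite leeBlDr.
Qed.
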